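(* (i) Let $I,J$ be sets and $R\colon I\times J\to[0,1]$ a fuzzy relation. Then the mappings $d_R\colon[0,1]^I\to[0,1]^J$ and $h_R\colon[0,1]^J\to[0,1]^I$ satisfy $d_R\rightleftharpoons h_R$. (ii) Let $\mathbf A$ and $\mathbf B$ be semisimple Pavelka algebras and let $d\colon A\to B$, $h\colon B\to A$ satisfy $d\rightleftharpoons h$. Then there exists a fuzzy relation $R\colon\mathrm{Spec_M}\mathbf A\times\mathrm{Spec_M}\mathbf B\to[0,1]$ (namely $R(F,G)=\bigvee_{a\in A}(d(a)/G\cdot a/F)$) such that $n_{\mathbf B}(d(x))=d_R(n_{\mathbf A}(x))$ for all $x\in A$ and $n_{\mathbf A}(h(y))=h_R(n_{\mathbf B}(y))$ for all $y\in B$, with $I=\mathrm{Spec_M}\mathbf A$, $J=\mathrm{Spec_M}\mathbf B$.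
   Context: An MV-algebra $(A;\oplus,\neg,0)$ carries derived operations $1=\neg0$, $x\cdot y=\neg(\neg x\oplus\neg y)$, $x\rightarrow y=\neg x\oplus y$, lattice operations $x\vee y=\neg(\neg x\oplus y)\oplus y$, $x\wedge y=\neg(\neg x\vee\neg y)$, order $x\le y$ iff $\neg x\oplus y=1$. The standard MV-algebra is $[0,1]$ with $x\oplus y=\min\{x+y,1\}$, $\neg x=1-x$. A Pavelka algebra is $\mathbf A=(A;\oplus,\neg,\{\mathbf r\mid r\in[0,1]\cap\mathbb Q\})$ with $(A;\oplus,\neg,\mathbf 0)$ an MV-algebra, $\mathbf r\oplus\mathbf s=\mathbf t$ whenever $\min\{r+s,1\}=t$, and $\neg\mathbf r=\mathbf s$ whenever $1-r=s$. The standard Pavelka algebra is $[0,1]$ with $\mathbf r$ interpreted as $r$; $[0,1]^I$ is its power. Filters are filters of the MV-reduct (nonempty up-sets closed under $\cdot$); $\mathrm{Spec_M}\mathbf A$ is the set of maximal proper filters; for $F\in\mathrm{Spec_M}\mathbf A$, $\mathbf A/F$ embeds uniquely into $[0,1]$ and $x/F$ is identified with its image. $\mathbf A$ is semisimple if its MV-reduct is a subdirect product of simple MV-algebras. Natural embedding: $n_{\mathbf A}(x)(F)=x/F$. For $d\colon A\to B$, $h\colon B\to A$: $d\rightleftharpoons h$ means $d,h$ are antitone, $x\le d(y)$ iff $y\le h(x)$ for all $y\in A$, $x\in B$, and $\mathbf r\rightarrow d(x)=d(\mathbf r\cdot x)$ for all $x\in A$ and constants $\mathbf r$ (equivalently $\mathbf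 r\rightarrow h(y)=h(\mathbf r\cdot y)$ for all $y\in B$). For $R\colon I\times J\to[0,1]$: $d_R(x)(j)=\bigwedge_{i\in I}(x(i)\rightarrow R(i,j))$ for $x\in[0,1]^I$; $h_R(y)(i)=\bigwedge_{j\in J}(y(j)\rightarrow R(i,j))$ for $y\in[0,1]^J$. *)

(* Defs.v *)
From Stdlib Require Import Reals Lra QArith Qreals ClassicalEpsilon.
Open Scope R_scope.

Definition I01 : Type := {r : R | 0 <= r <= 1}.
Definition v01 (x : I01) : R := proj1_sig x.

Definition Q01 : Type := {q : Q | 0 <= Q2R q <= 1}.
Definition qv (q : Q01) : R := Q2R (proj1_sig q).

Record MVSig := {
  mcar :> Type;
  moplus : mcar -> mcar -> mcar;
  mneg : mcar -> mcar;
  mzero : mcar }.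
Arguments moplus {m} _ _.
Arguments mneg {m} _.
Arguments mzero {m}.

Record PSig := {
  psig_mv :> MVSig;
  pcst : Q01 -> psig_mv }.
Arguments pcst {p} _.

Section Derived.
Variable M : MVSig.
Definition mone : M := mneg mzero.
Definition mmul (x y : M) : M := mneg (moplus (mneg x) (mneg y)).
Definition marrow (x y : M) : M := moplus (mneg x) y.
Definition mjoin (x y : M) : M := moplus (mneg (moplus (mneg x) y)) y.
Definition mmeet (x y : M) : M := mneg (mjoin (mneg x) (mneg y)).
Definition mle (x y : M) : Prop := moplus (mneg x) y = mone.

Definition is_MV : Prop :=
  (forall x y z : M, moplus x (moplus y z) = moplus (moplus x y) z) /\
  (forall x y : M, moplus x y = moplus y x) /\
  (forall x : M, moplus x mzero = x) /\
  (forall x : M, mneg (mneg x) = x) /\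
  (forall x : M, moplus x (mneg mzero) = mneg mzero) /\
  (forall x y : M, moplus (mneg (moplus (mneg x) y)) y
                   = moplus (mneg (moplus (mneg y) x)) x).

Definition is_filter (F : M -> Prop) : Prop :=
  (exists x, F x) /\
  (forall x y, F x -> mle x y -> F y) /\
  (forall x y, F x -> F y -> F (mmul x y)).
Definition is_proper_filter (F : M -> Prop) : Prop :=
  is_filter F /\ exists x, ~ F x.
Definition is_maximal_filter (F : M -> Prop) : Prop :=
  is_proper_filter F /\
  forall G, is_proper_filter G -> (forall x, F x -> G x) -> forall x, G x -> F x.

Definition is_simple : Prop :=
  is_MV /\ mzero <> mone /\
  forall F, is_filter F -> (forall x, F x <-> x = mone) \/ (forall x, F x).
End Derived.
Arguments mone {M}. Arguments mmul {M} _ _. Arguments marrow {M} _ _.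
Arguments mjoin {M} _ _. Arguments mmeet {M} _ _. Arguments mle {M} _ _.

Definition is_MVhom (M N : MVSig) (f : M -> N) : Prop :=
  (forall x y, f (moplus x y) = moplus (f x) (f y)) /\
  (forall x, f (mneg x) = mneg (f x)) /\
  f mzero = mzero.

Definition is_Pavelka (A : PSig) : Prop :=
  is_MV A /\
  (forall r : Q01, qv r = 0 -> (mzero : A) = pcst r) /\
  (forall r s t : Q01, Rmin (qv r + qv s) 1 = qv t ->
      moplus (pcst r : A) (pcst s) = pcst t) /\
  (forall r s : Q01, 1 - qv r = qv s -> mneg (pcst r : A) = pcst s).

Definition is_Phom (A B : PSig) (f : A -> B) : Prop :=
  is_MVhom A B f /\ forall r : Q01, f (pcst r) = pcst r.

(** Semisimple: the MV-reduct is a subdirect product of simple MV-algebras *)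
Definition semisimple (A : PSig) : Prop :=
  exists (K : Type) (S : K -> MVSig) (e : A -> forall k, S k),
    (forall k, is_simple (S k)) /\
    (forall k, is_MVhom A (S k) (fun x => e x k)) /\
    (forall x y, (forall k, e x k = e y k) -> x = y) /\
    (forall k (s : S k), exists x, e x k = s).

Lemma i01_oplus_ok (x y : I01) : 0 <= Rmin (v01 x + v01 y) 1 <= 1.
Proof. destruct x as [a Ha], y as [b Hb]; unfold v01, Rmin; simpl;
  destruct Rle_dec; lra. Qed.
Lemma i01_neg_ok (x : I01) : 0 <= 1 - v01 x <= 1.
Proof. destruct x as [a Ha]; unfold v01; simpl; lra. Qed.
Lemma i01_zero_ok : 0 <= 0 <= 1.
Proof. lra. Qed.

Definition i01_oplus (x y : I01) : I01 := exist _ _ (i01_oplus_ok x y).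
Definition i01_neg (x : I01) : I01 := exist _ _ (i01_neg_ok x).
Definition i01_zero : I01 := exist _ _ i01_zero_ok.
Definition i01_cst (q : Q01) : I01 := exist _ (qv q) (proj2_sig q).

Definition std01_mv : MVSig := Build_MVSig I01 i01_oplus i01_neg i01_zero.
Definition std01 : PSig := Build_PSig std01_mv i01_cst.

Definition pow01_mv (K : Type) : MVSig :=
  Build_MVSig (K -> I01) (fun x y k => i01_oplus (x k) (y k))
              (fun x k => i01_neg (x k)) (fun _ => i01_zero).
Definition pow01 (K : Type) : PSig := Build_PSig (pow01_mv K) (fun q _ => i01_cst q).

Section SupInf.
Variable K : Type.
Variable f : K -> I01.
Definition sup_set (r : R) : Prop := r = 0 \/ exists k, r = v01 (f k).
Lemma sup_set_bound : bound sup_set.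
Proof. exists 1. intros r [->|[k ->]]; [lra|]. destruct (f k) as [a Ha]; simpl; lra. Qed.
Lemma sup_set_ne : exists r, sup_set r.
Proof. exists 0; left; reflexivity. Qed.
Definition sup_val : R := proj1_sig (completeness sup_set sup_set_bound sup_set_ne).
Lemma sup_val_ok : 0 <= sup_val <= 1.
Proof.
  unfold sup_val; destruct (completeness _ _ _) as [m [Hub Hl]]; simpl; split.
  - apply Hub; left; reflexivity.
  - apply Hl; intros r [->|[k ->]]; [lra|]. destruct (f k) as [a Ha]; simpl; lra.
Qed.
(** the supremum in [0,1] (empty sup = 0) *)
Definition sup01 : I01 := exist _ sup_val sup_val_ok.
End SupInf.
Arguments sup01 {K} f.
(** the infimum in [0,1] (empty inf = 1) *)
Definition inf01 {K : Type} (f : K -> I01) : I01 :=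
  i01_neg (sup01 (fun k => i01_neg (f k))).

Definition dR {I J : Type} (Rel : I -> J -> I01) (x : I -> I01) : J -> I01 :=
  fun j => inf01 (fun i => @marrow std01 (x i) (Rel i j)).
Definition hR {I J : Type} (Rel : I -> J -> I01) (y : J -> I01) : I -> I01 :=
  fun i => inf01 (fun j => @marrow std01 (y j) (Rel i j)).

Definition galois (A B : PSig) (d : A -> B) (h : B -> A) : Prop :=
  (forall x y : A, mle x y -> mle (d y) (d x)) /\
  (forall x y : B, mle x y -> mle (h y) (h x)) /\
  (forall (y : A) (x : B), mle x (d y) <-> mle y (h x)) /\
  (forall (r : Q01) (x : A), marrow (pcst r : B) (d x) = d (mmul (pcst r : A) x)).

Definition SpecM (A : PSig) : Type := {F : A -> Prop | is_maximal_filter A F}.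

(** x/F : the image of x under the (unique) embedding of A/F into [0,1],
    i.e. the homomorphism φ : A → [0,1] with φ^{-1}(1) = F. *)
Definition quot_hom (A : PSig) (F : SpecM A) : A -> I01 :=
  epsilon (inhabits (fun _ : A => i01_zero))
    (fun phi : A -> I01 => is_Phom A std01 phi /\
       forall a : A, proj1_sig F a <-> phi a = @mone std01).
Definition quot (A : PSig) (x : A) (F : SpecM A) : I01 := quot_hom A F x.

Definition nat_emb (A : PSig) (x : A) : SpecM A -> I01 := fun F => quot A x F.

Definition Rel_of (A B : PSig) (d : A -> B) : SpecM A -> SpecM B -> I01 :=
  fun F G => sup01 (fun a : A => @mmul std01 (quot B (d a) G) (quot A a F)).

(* Main.v *)
Require Import Defs.
From mathcomp Require classical_sets.
From Stdlib Require Import Reals QArith Qreals Lra Lia ZArith Classical ClassicalEpsilon ProofIrrelevance FunctionalExtensionality PropExtensionality.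
Open Scope R_scope.

Open Scope R_scope.

Lemma I01_eq (a b : I01) : v01 a = v01 b -> a = b.
Proof.
  destruct a as [a Ha], b as [b Hb]; unfold v01; simpl; intros ->.
  f_equal; apply proof_irrelevance.
Qed.

Lemma v01_bnd (a : I01) : 0 <= v01 a <= 1.
Proof. destruct a; simpl; auto. Qed.

Lemma sup01_ub {K} (f : K -> I01) k : v01 (f k) <= v01 (sup01 f).
Proof.
  unfold sup01, sup_val; simpl. destruct (completeness _ _ _) as [m [Hub Hl]]; simpl.
  apply Hub; right; exists k; reflexivity.
Qed.

Lemma sup01_lub {K} (f : K -> I01) b :
  0 <= b -> (forall k, v01 (f k) <= b) -> v01 (sup01 f) <= b.
Proof.
  intros H0 H. unfold sup01, sup_val; simpl. destruct (completeness _ _ _) as [m [Hub Hl]]; simpl.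
  apply Hl. intros r [->|[k ->]]; auto.
Qed.

Lemma inf01_v {K} (f : K -> I01) : v01 (inf01 f) = 1 - v01 (sup01 (fun k => i01_neg (f k))).
Proof. reflexivity. Qed.

Lemma i01_neg_v (a : I01) : v01 (i01_neg a) = 1 - v01 a.
Proof. reflexivity. Qed.
Lemma inf01_lb {K} (f : K -> I01) k : v01 (inf01 f) <= v01 (f k).
Proof.
  rewrite inf01_v. pose proof (sup01_ub (fun k => i01_neg (f k)) k) as H. cbv beta in H. rewrite i01_neg_v in H. lra.
Qed.

Lemma inf01_glb {K} (f : K -> I01) b :
  b <= 1 -> (forall k, b <= v01 (f k)) -> b <= v01 (inf01 f).
Proof.
  intros H1 H. rewrite inf01_v.
  assert (v01 (sup01 (fun k => i01_neg (f k))) <= 1 - b); [|lra].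
  apply sup01_lub; [lra|]. intros k; rewrite i01_neg_v; specialize (H k); lra.
Qed.

Lemma Q_between (a b : R) : a < b -> exists q : Q, a < Q2R q < b.
Proof.
  intros Hab. destruct (archimed_cor1 (b - a)) as [N [HN HN0]]; [lra|].
  assert (HNp : 0 < INR N) by (apply lt_0_INR; lia).
  destruct (archimed (a * INR N)) as [H1 H2].
  exists (Qmake (up (a * INR N)) (Pos.of_nat N)). unfold Q2R; simpl.
  assert (E : IZR (Z.pos (Pos.of_nat N)) = INR N).
  { rewrite <- positive_nat_Z, <- INR_IZR_INZ, Nat2Pos.id; auto; lia. }
  rewrite E. set (z := IZR (up (a * INR N))) in *.
  split.
  - apply (Rmult_lt_reg_r (INR N)); auto. field_simplify; lra.
  - apply (Rmult_lt_reg_r (INR N)); auto. field_simplify; [|lra].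
    assert (/ INR N * INR N < (b - a) * INR N) by (apply Rmult_lt_compat_r; lra).
    rewrite Rinv_l in H; lra.
Qed.

Definition mkQ (q : Q) (H : 0 <= Q2R q <= 1) : Q01 := exist _ q H.
Lemma qv_mkQ q H : qv (mkQ q H) = Q2R q.
Proof. reflexivity. Qed.

Lemma exQ01 (a b : R) : a < b -> a < 1 -> 0 < b -> exists q : Q01, a < qv q < b.
Proof.
  intros H1 H2 H3. destruct (Q_between (Rmax a 0) (Rmin b 1)) as [q Hq].
  { unfold Rmax, Rmin; destruct Rle_dec; destruct Rle_dec; lra. }
  assert (0 <= Q2R q <= 1) as Hq'.
  { unfold Rmax, Rmin in Hq; destruct Rle_dec in Hq; destruct Rle_dec in Hq; lra. }
  exists (mkQ q Hq'). rewrite qv_mkQ.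
  unfold Rmax, Rmin in Hq; destruct Rle_dec in Hq; destruct Rle_dec in Hq; lra.
Qed.

Lemma qv_bnd (q : Q01) : 0 <= qv q <= 1.
Proof. destruct q; simpl; auto. Qed.

Lemma q01_0_ok : 0 <= Q2R 0 <= 1. Proof. unfold Q2R; simpl; lra. Qed.
Definition q0 : Q01 := mkQ 0 q01_0_ok.
Lemma qv_q0 : qv q0 = 0. Proof. unfold qv; simpl; unfold Q2R; simpl; lra. Qed.
Lemma q01_1_ok : 0 <= Q2R 1 <= 1. Proof. unfold Q2R; simpl; lra. Qed.
Definition q1 : Q01 := mkQ 1 q01_1_ok.
Lemma qv_q1 : qv q1 = 1. Proof. unfold qv; simpl; unfold Q2R; simpl; lra. Qed.
Lemma qcompl_ok (q : Q01) : 0 <= Q2R (1 - proj1_sig q) <= 1.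
Proof. rewrite Q2R_minus, RMicromega.Q2R_1. pose proof (qv_bnd q). unfold qv in H. lra. Qed.
Definition qcompl (q : Q01) : Q01 := mkQ _ (qcompl_ok q).
Lemma qv_qcompl q : qv (qcompl q) = 1 - qv q.
Proof. unfold qcompl; rewrite qv_mkQ, Q2R_minus, RMicromega.Q2R_1; reflexivity. Qed.
Lemma qadd_ok (q p : Q01) (H : qv q + qv p <= 1) : 0 <= Q2R (proj1_sig q + proj1_sig p) <= 1.
Proof. rewrite Q2R_plus. pose proof (qv_bnd q); pose proof (qv_bnd p). unfold qv in *. lra. Qed.
Definition qadd (q p : Q01) (H : qv q + qv p <= 1) : Q01 := mkQ _ (qadd_ok q p H).
Lemma qv_qadd q p H : qv (qadd q p H) = qv q + qv p.
Proof. unfold qadd; rewrite qv_mkQ, Q2R_plus; reflexivity. Qed.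

Open Scope R_scope.

Section MVTheory.
Variable M : MVSig.
Hypothesis HM : is_MV M.
Local Notation "x ⊕ y" := (@moplus M x y) (at level 50, left associativity).
Local Notation "¬ x" := (@mneg M x) (at level 35, right associativity).
Local Notation "0" := (@mzero M).
Local Notation "1" := (@mone M).
Local Notation "x ⊙ y" := (@mmul M x y) (at level 40, left associativity).
Local Notation "x ≤ y" := (@mle M x y) (at level 70).

Lemma pA (x y z : M) : x ⊕ (y ⊕ z) = x ⊕ y ⊕ z. Proof. apply HM. Qed.
Lemma pC (x y : M) : x ⊕ y = y ⊕ x. Proof. apply HM. Qed.
Lemma p0 (x : M) : x ⊕ 0 = x. Proof. apply HM. Qed.
Lemma nn (x : M) : ¬ ¬ x = x. Proof. apply HM. Qed.
Lemma p1 (x : M) : x ⊕ 1 = 1. Proof. apply HM. Qed.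
Lemma A6 (x y : M) : ¬ (¬ x ⊕ y) ⊕ y = ¬ (¬ y ⊕ x) ⊕ x. Proof. apply HM. Qed.

Lemma n_inj (x y : M) : ¬ x = ¬ y -> x = y.
Proof. intros H. rewrite <- (nn x), <- (nn y), H; reflexivity. Qed.
Lemma n0 : ¬ 0 = 1. Proof. reflexivity. Qed.
Lemma n1 : ¬ 1 = 0. Proof. apply nn. Qed.
Lemma p0l (x : M) : 0 ⊕ x = x. Proof. rewrite pC; apply p0. Qed.
Lemma p1l (x : M) : 1 ⊕ x = 1. Proof. rewrite pC; apply p1. Qed.
Lemma pcompl (x : M) : ¬ x ⊕ x = 1.
Proof. pose proof (A6 x 1) as H. rewrite p1, n1, p0l in H. rewrite <- H; try reflexivity; apply p1. Qed.
Lemma pcompl' (x : M) : x ⊕ ¬ x = 1. Proof. rewrite pC; apply pcompl. Qed.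

Lemma le_refl (x : M) : x ≤ x. Proof. apply pcompl. Qed.
Lemma le_antisym (x y : M) : x ≤ y -> y ≤ x -> x = y.
Proof.
  unfold mle; intros H1 H2. pose proof (A6 x y) as H. rewrite H1, H2, n1, !p0l in H. auto.
Qed.
Lemma mul_def (x y : M) : x ⊙ y = ¬ (¬ x ⊕ ¬ y). Proof. reflexivity. Qed.
Lemma n_mul (x y : M) : ¬ (x ⊙ y) = ¬ x ⊕ ¬ y. Proof. apply nn. Qed.
Lemma n_plus (x y : M) : ¬ (x ⊕ y) = ¬ x ⊙ ¬ y.
Proof. rewrite mul_def, !nn; reflexivity. Qed.

Lemma le_ex (x y : M) : x ≤ y -> y = x ⊕ (y ⊙ ¬ x).
Proof.
  unfold mle; intros H. rewrite mul_def, nn, pC, A6, H, n1, p0l; reflexivity.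
Qed.
Lemma le_plus (x z : M) : x ≤ x ⊕ z.
Proof. unfold mle. rewrite pA, pcompl, p1l; reflexivity. Qed.
Lemma le_plus_r (x z : M) : x ≤ z ⊕ x.
Proof. rewrite pC; apply le_plus. Qed.
Lemma le_trans (x y z : M) : x ≤ y -> y ≤ z -> x ≤ z.
Proof.
  intros H1 H2. apply le_ex in H1. apply le_ex in H2. remember (y ⊙ ¬ x) as a. remember (z ⊙ ¬ y) as b.
  rewrite H2, H1, <- pA. apply le_plus.
Qed.
Lemma plus_mono_l (x y w : M) : x ≤ y -> x ⊕ w ≤ y ⊕ w.
Proof.
  intros H. apply le_ex in H. remember (y ⊙ ¬ x) as z. rewrite H.
  replace (x ⊕ z ⊕ w) with (x ⊕ w ⊕ z). apply le_plus.
  rewrite <- !pA, (pC z); reflexivity.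
Qed.
Lemma plus_mono (x y x' y' : M) : x ≤ x' -> y ≤ y' -> x ⊕ y ≤ x' ⊕ y'.
Proof.
  intros H1 H2. apply le_trans with (x' ⊕ y). apply plus_mono_l; auto.
  rewrite (pC x'), (pC x'). apply plus_mono_l; auto.
Qed.
Lemma n_anti (x y : M) : x ≤ y -> ¬ y ≤ ¬ x.
Proof. unfold mle; intros H. rewrite nn, pC; auto. Qed.
Lemma le_0 (x : M) : 0 ≤ x. Proof. unfold mle. rewrite n0; apply p1l. Qed.
Lemma le_1 (x : M) : x ≤ 1. Proof. unfold mle. apply p1. Qed.
Lemma le_mul0 (x y : M) : x ≤ y <-> x ⊙ ¬ y = 0.
Proof.
  unfold mle. rewrite mul_def, nn. split; intros H.
  - rewrite H; apply n1.
  - apply n_inj. rewrite H, n1; reflexivity.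
Qed.
Lemma mC (x y : M) : x ⊙ y = y ⊙ x. Proof. rewrite !mul_def, pC; reflexivity. Qed.
Lemma mA (x y z : M) : x ⊙ (y ⊙ z) = x ⊙ y ⊙ z.
Proof. rewrite !mul_def, !nn, pA; reflexivity. Qed.
Lemma m1 (x : M) : x ⊙ 1 = x. Proof. rewrite mul_def, n1, p0, nn; reflexivity. Qed.
Lemma m0 (x : M) : x ⊙ 0 = 0. Proof. rewrite mul_def, n0, p1, n1; reflexivity. Qed.
Lemma mcompl (x : M) : x ⊙ ¬ x = 0. Proof. rewrite mul_def, nn, pcompl, n1; reflexivity. Qed.
Lemma resid (x y z : M) : x ⊙ y ≤ z <-> x ≤ ¬ y ⊕ z.
Proof. unfold mle. rewrite n_mul, pA. tauto. Qed.
Lemma mul_mono_l (x y w : M) : x ≤ y -> x ⊙ w ≤ y ⊙ w.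
Proof.
  intros H. rewrite !mul_def. apply n_anti. apply plus_mono_l. apply n_anti; auto.
Qed.
Lemma mul_mono (x y x' y' : M) : x ≤ x' -> y ≤ y' -> x ⊙ y ≤ x' ⊙ y'.
Proof.
  intros H1 H2. apply le_trans with (x' ⊙ y). apply mul_mono_l; auto.
  rewrite (mC x'), (mC x'). apply mul_mono_l; auto.
Qed.
Lemma mul_le (x y : M) : x ⊙ y ≤ x.
Proof. apply resid. apply le_plus_r. Qed.
Lemma le_0_eq (x : M) : x ≤ 0 -> x = 0.
Proof. intros H; apply le_antisym; auto; apply le_0. Qed.
Lemma le_1_eq (x : M) : 1 ≤ x -> x = 1.
Proof. intros H; apply le_antisym; auto; apply le_1. Qed.

Lemma join_def (x y : M) : mjoin x y = x ⊙ ¬ y ⊕ y.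
Proof. unfold mjoin. rewrite mul_def, nn; reflexivity. Qed.
Lemma join_C (x y : M) : mjoin x y = mjoin y x.
Proof. unfold mjoin; apply A6. Qed.
Lemma join_ub_r (x y : M) : y ≤ mjoin x y.
Proof. rewrite join_def; apply le_plus_r. Qed.
Lemma join_ub_l (x y : M) : x ≤ mjoin x y.
Proof. rewrite join_C; apply join_ub_r. Qed.
Lemma join_lub (x y z : M) : x ≤ z -> y ≤ z -> mjoin x y ≤ z.
Proof.
  intros H1 H2. rewrite join_def.
  apply le_trans with (z ⊙ ¬ y ⊕ y). apply plus_mono_l, mul_mono_l; auto.
  rewrite <- join_def, join_C, join_def. apply le_mul0 in H2. rewrite H2, p0l. apply le_refl.
Qed.
Lemma meet_n (x y : M) : ¬ mmeet x y = mjoin (¬ x) (¬ y).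
Proof. unfold mmeet; apply nn. Qed.
Lemma meet_lb_l (x y : M) : mmeet x y ≤ x.
Proof. unfold mmeet. rewrite <- (nn x) at 2. apply n_anti, join_ub_l. Qed.
Lemma meet_lb_r (x y : M) : mmeet x y ≤ y.
Proof. unfold mmeet. rewrite <- (nn y) at 2. apply n_anti, join_ub_r. Qed.
Lemma meet_glb (x y z : M) : z ≤ x -> z ≤ y -> z ≤ mmeet x y.
Proof.
  intros H1 H2. unfold mmeet. rewrite <- (nn z). apply n_anti, join_lub; apply n_anti; auto.
Qed.

Lemma mul_join (c u v : M) : c ⊙ mjoin u v ≤ mjoin (c ⊙ u) (c ⊙ v).
Proof.
  rewrite mC. apply resid. apply join_lub; apply resid; rewrite mC.
  apply join_ub_l. apply join_ub_r.
Qed.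
Lemma plus_meet (p s t : M) : mmeet (p ⊕ s) (p ⊕ t) ≤ p ⊕ mmeet s t.
Proof.
  rewrite <- (nn (p ⊕ mmeet s t)). unfold mmeet at 1. apply n_anti.
  rewrite n_plus, meet_n, !n_plus. apply mul_join.
Qed.

Lemma iso1 (c v : M) : v ≤ c -> c ⊙ (¬ c ⊕ v) = v.
Proof.
  unfold mle; intros H. rewrite mul_def.
  assert (E : ¬ (¬ c ⊕ v) ⊕ ¬ c = ¬ v).
  { rewrite (pC (¬ c) v). rewrite <- (nn v) at 1. rewrite A6, nn, (pC c), H, n1, p0l; reflexivity. }
  rewrite pC, E, nn; reflexivity.
Qed.
Lemma iso2 (c x : M) : ¬ c ≤ x -> ¬ c ⊕ c ⊙ x = x.
Proof.
  unfold mle; intros H. rewrite nn in H. rewrite mul_def, pC.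
  rewrite (pC (¬ c) (¬ x)). rewrite A6, nn, H, n1, p0l; reflexivity.
Qed.
Lemma iso_meet (c x y : M) : ¬ c ≤ x -> ¬ c ≤ y -> mmeet (c ⊙ x) (c ⊙ y) ≤ c ⊙ mmeet x y.
Proof.
  intros Hx Hy. set (v := mmeet (c ⊙ x) (c ⊙ y)).
  assert (Hv : v ≤ c) by (apply le_trans with (c ⊙ x); [apply meet_lb_l|apply mul_le]).
  rewrite <- (iso1 c v Hv). apply mul_mono; [apply le_refl|].
  apply meet_glb.
  - apply le_trans with (¬ c ⊕ c ⊙ x); [|rewrite iso2; auto; apply le_refl].
    apply plus_mono; [apply le_refl|apply meet_lb_l].
  - apply le_trans with (¬ c ⊕ c ⊙ y); [|rewrite iso2; auto; apply le_refl].
    apply plus_mono; [apply le_refl|apply meet_lb_r].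
Qed.
Lemma meet_C (x y : M) : mmeet x y = mmeet y x.
Proof. unfold mmeet; rewrite join_C; reflexivity. Qed.

Lemma minus_meet (x y : M) : x ⊙ ¬ y = x ⊙ ¬ mmeet x y.
Proof.
  apply le_antisym.
  - apply mul_mono; [apply le_refl|]. apply n_anti, meet_lb_r.
  - rewrite meet_n. apply le_trans with (mjoin (x ⊙ ¬ x) (x ⊙ ¬ y)). apply mul_join.
    apply join_lub. rewrite mcompl; apply le_0. apply le_refl.
Qed.

Lemma prelin (x y : M) : mmeet (x ⊙ ¬ y) (y ⊙ ¬ x) = 0.
Proof.
  apply le_0_eq. set (m := mmeet x y).
  rewrite (minus_meet x y), (minus_meet y x), (meet_C y x). fold m.
  rewrite (mC x), (mC y). apply le_trans with (¬ m ⊙ mmeet x y).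
  apply iso_meet; rewrite nn; [apply meet_lb_l|apply meet_lb_r].
  fold m. rewrite mC, mcompl. apply le_refl.
Qed.

Lemma orth_plus (a c b : M) : mmeet a b = 0 -> mmeet c b = 0 -> mmeet (a ⊕ c) b = 0.
Proof.
  intros H1 H2. apply le_0_eq. rewrite <- H1. apply meet_glb; [|apply meet_lb_r].
  apply le_trans with (mmeet (a ⊕ c) (a ⊕ b)).
  apply meet_glb; [apply meet_lb_l|]. apply le_trans with b; [apply meet_lb_r|apply le_plus_r].
  apply le_trans with (a ⊕ mmeet c b). apply plus_meet. rewrite H2, p0. apply le_refl.
Qed.

Fixpoint mpow (x : M) (n : nat) : M := match n with O => 1 | S n => x ⊙ mpow x n end.
Definition msum (x : M) (n : nat) : M := ¬ mpow (¬ x) n.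
Lemma msum_S (x : M) n : msum x (S n) = x ⊕ msum x n.
Proof. unfold msum; simpl. rewrite n_mul, nn; reflexivity. Qed.
Lemma msum_0 (x : M) : msum x 0 = 0. Proof. unfold msum; simpl; apply n1. Qed.
Lemma mpow_add (x : M) n m : mpow x (n + m) = mpow x n ⊙ mpow x m.
Proof. induction n; simpl. rewrite mC, m1; reflexivity. rewrite IHn, mA; reflexivity. Qed.

Lemma orth_msum (a b : M) n : mmeet a b = 0 -> mmeet (msum a n) b = 0.
Proof.
  intros H. induction n. rewrite msum_0. apply le_0_eq, meet_lb_l.
  rewrite msum_S. apply orth_plus; auto.
Qed.

Lemma meet_11 : mmeet 1 1 = 1.
Proof. apply le_1_eq. apply meet_glb; apply le_refl. Qed.

Lemma msum_mono (x y : M) n : x ≤ y -> msum x n ≤ msum y n.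
Proof. intros H. induction n. rewrite !msum_0; apply le_refl. rewrite !msum_S; apply plus_mono; auto. Qed.

End MVTheory.

Section Simple.
Variable S : MVSig.
Hypothesis HS : is_simple S.
Let HM : is_MV S := proj1 HS.

Lemma simple_nil (x : S) : x <> mone -> exists n, mpow S x n = mzero.
Proof.
  intros Hx. set (Fx := fun z : S => exists n, mle (mpow S x n) z).
  assert (HF : is_filter S Fx).
  { split; [|split].
    - exists mone, O. apply le_refl; auto.
    - intros a b [n Hn] Hab. exists n. eapply le_trans; eauto.
    - intros a b [n Hn] [m Hm]. exists (n + m)%nat. rewrite mpow_add; auto. apply mul_mono; auto. }
  pose proof HS as [_ [_ Hs]]. destruct (Hs Fx HF) as [H|H].
  - exfalso. apply Hx, H. exists 1%nat. simpl. rewrite m1; auto. apply le_refl; auto.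
  - destruct (H mzero) as [n Hn]. exists n. apply le_0_eq; auto.
Qed.

Lemma simple_chain (x y : S) : mle x y \/ mle y x.
Proof.
  destruct (classic (mmul x (mneg y) = mzero)) as [H1|H1]; [left; apply le_mul0; auto|].
  destruct (classic (mmul y (mneg x) = mzero)) as [H2|H2]; [right; apply le_mul0; auto|].
  exfalso. set (a := mmul x (mneg y)) in *. set (b := mmul y (mneg x)) in *.
  assert (Ha : mneg a <> mone). { intros E. apply H1. rewrite <- (nn S HM a), E. apply n1; auto. }
  assert (Hb : mneg b <> mone). { intros E. apply H2. rewrite <- (nn S HM b), E. apply n1; auto. }
  destruct (simple_nil _ Ha) as [n Hn]. destruct (simple_nil _ Hb) as [m Hm].
  assert (Ea : msum S a n = mone) by (unfold msum; rewrite Hn; reflexivity).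
  assert (Eb : msum S b m = mone) by (unfold msum; rewrite Hm; reflexivity).
  pose proof (prelin S HM x y) as P. fold a b in P.
  apply (orth_msum S HM a b n) in P. rewrite Ea in P. rewrite meet_C in P; auto.
  apply (orth_msum S HM b mone m) in P. rewrite Eb, meet_11 in P; auto.
  pose proof HS as [_ [Hne _]]. apply Hne. symmetry; auto.
Qed.
End Simple.

Open Scope R_scope.

Lemma v01_cst (q : Q01) : v01 (i01_cst q) = qv q. Proof. reflexivity. Qed.

Lemma approx_below (a d : R) : 0 <= a <= 1 -> 0 < d ->
  exists q : Q01, a - d < qv q <= a /\ (qv q < a \/ qv q = 0).
Proof.
  intros Ha Hd. destruct (Req_dec a 0) as [E|E].
  - exists q0. rewrite qv_q0. lra.
  - destruct (exQ01 (a - d) a) as [q Hq]; try lra. exists q; lra.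
Qed.

Section Holder.
Variable T : Type.
Variables (pl : T -> T -> T) (ng : T -> T) (c : Q01 -> T) (le : T -> T -> Prop).
Hypothesis Hrefl : forall x, le x x.
Hypothesis Htrans : forall x y z, le x y -> le y z -> le x z.
Hypothesis Hng : forall x y, le x y -> le (ng y) (ng x).
Hypothesis Hnn1 : forall x, le x (ng (ng x)).
Hypothesis Hnn2 : forall x, le (ng (ng x)) x.
Hypothesis Hpl : forall x y x' y', le x x' -> le y y' -> le (pl x y) (pl x' y').
Hypothesis Hcle : forall q p, le (c q) (c p) -> qv q <= qv p.
Hypothesis Hc0 : forall q s, qv q = 0 -> le (c q) s.
Hypothesis Hcng : forall q p, qv p = 1 - qv q -> le (ng (c q)) (c p) /\ le (c p) (ng (c q)).
Hypothesis Hcpl : forall q p t, qv t = qv q + qv p -> le (pl (c q) (c p)) (c t) /\ le (c t) (pl (c q) (c p)).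
Hypothesis Hcomp : forall q p s, qv q < qv p -> le (c q) s \/ le s (c p).

Definition iota (s : T) : I01 :=
  sup01 (fun q : {q : Q01 | le (c q) s} => i01_cst (proj1_sig q)).

Lemma I1 q s : le (c q) s -> qv q <= v01 (iota s).
Proof. intros H. apply (sup01_ub (fun q : {q : Q01 | le (c q) s} => i01_cst (proj1_sig q)) (exist _ q H)). Qed.

Lemma I2 q s : qv q < v01 (iota s) -> le (c q) s.
Proof.
  intros H. apply NNPP; intros Hn.
  assert (v01 (iota s) <= qv q); [|lra].
  apply sup01_lub; [apply qv_bnd|]. intros [q' Hq']; rewrite v01_cst; simpl.
  destruct (Rle_dec (qv q') (qv q)) as [|Hlt]; auto. apply Rnot_le_lt in Hlt. exfalso; apply Hn.
  apply Htrans with (c q'); auto.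
  pose proof (qv_bnd q'). pose proof (qv_bnd q).
  destruct (exQ01 (qv q) (qv q')) as [r Hr]; try lra.
  destruct (Hcomp q r (c q')) as [H3|H3]; try lra; auto.
  apply Hcle in H3; lra.
Qed.

Lemma I3 p s : le s (c p) -> v01 (iota s) <= qv p.
Proof.
  intros H. apply sup01_lub; [apply qv_bnd|]. intros [q' Hq']; rewrite v01_cst; simpl.
  apply Hcle. eauto.
Qed.

Lemma I4 p s : v01 (iota s) < qv p -> le s (c p).
Proof.
  intros H. pose proof (qv_bnd p). pose proof (v01_bnd (iota s)).
  destruct (exQ01 (v01 (iota s)) (qv p)) as [q Hq]; try lra.
  destruct (Hcomp q p s) as [Hx|Hx]; try lra; auto.
  apply I1 in Hx; lra.
Qed.

Lemma iota_mono s t : le s t -> v01 (iota s) <= v01 (iota t).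
Proof.
  intros H. apply sup01_lub; [apply v01_bnd|]. intros [q Hq]; rewrite v01_cst; simpl.
  apply I1; eauto.
Qed.

Lemma iota_cst q : v01 (iota (c q)) = qv q.
Proof. apply Rle_antisym; [apply I3|apply I1]; auto. Qed.

Lemma iota_ng s : v01 (iota (ng s)) = 1 - v01 (iota s).
Proof.
  pose proof (v01_bnd (iota s)). pose proof (v01_bnd (iota (ng s))).
  destruct (Rtotal_order (v01 (iota (ng s))) (1 - v01 (iota s))) as [Hlt|[E|Hgt]]; auto; exfalso.
  - destruct (exQ01 (v01 (iota (ng s))) (1 - v01 (iota s))) as [q Hq]; try lra.
    assert (H1 : le (ng s) (c q)) by (apply I4; lra).
    assert (H2 : le (c (qcompl q)) s).
    { apply Htrans with (ng (c q)). apply Hcng; rewrite qv_qcompl; lra.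
      apply Htrans with (ng (ng s)); auto. }
    apply I1 in H2. rewrite qv_qcompl in H2. lra.
  - destruct (exQ01 (1 - v01 (iota s)) (v01 (iota (ng s)))) as [q Hq]; try lra.
    assert (H1 : le (c q) (ng s)) by (apply I2; lra).
    assert (H2 : le s (c (qcompl q))).
    { apply Htrans with (ng (ng s)); auto. apply Htrans with (ng (c q)); auto.
      apply Hcng; rewrite qv_qcompl; lra. }
    apply I3 in H2. rewrite qv_qcompl in H2. lra.
Qed.

Lemma iota_pl s t : v01 (iota (pl s t)) = Rmin (v01 (iota s) + v01 (iota t)) 1.
Proof.
  pose proof (v01_bnd (iota s)). pose proof (v01_bnd (iota t)). pose proof (v01_bnd (iota (pl s t))).
  remember (v01 (iota s)) as a. remember (v01 (iota t)) as b. remember (v01 (iota (pl s t))) as m.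
  apply Rle_antisym.
  - apply Rnot_lt_le; intros Hlt. unfold Rmin in Hlt; destruct Rle_dec as [Hab|Hab]; [|lra].
    assert (Hd : 0 < m - a - b) by lra. set (d := m - a - b) in *.
    assert (Hd' : d = m - a - b) by reflexivity. clearbody d.
    destruct (exQ01 a (a + d/2)) as [q Hq]; try lra.
    destruct (exQ01 b (b + d/2)) as [p Hp]; try lra.
    assert (Hs : qv q + qv p <= 1) by lra.
    assert (le (pl s t) (c (qadd q p Hs))).
    { apply Htrans with (pl (c q) (c p)). apply Hpl; apply I4; subst; lra.
      apply Hcpl; rewrite qv_qadd; reflexivity. }
    apply I3 in H2. rewrite qv_qadd in H2. subst; lra.
  - apply Rnot_lt_le; intros Hlt.
    set (b' := Rmin b (1 - a)). assert (Eb' : b' = Rmin b (1 - a)) by reflexivity. clearbody b'.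
    assert (Eab : Rmin (a + b) 1 = a + b') by (rewrite Eb'; unfold Rmin; repeat destruct Rle_dec; lra).
    rewrite Eab in Hlt.
    assert (Hb' : 0 <= b' <= 1) by (rewrite Eb'; unfold Rmin; destruct Rle_dec; lra).
    assert (Hb'b : b' <= b) by (rewrite Eb'; unfold Rmin; destruct Rle_dec; lra).
    assert (Hb'a : b' <= 1 - a) by (rewrite Eb'; unfold Rmin; destruct Rle_dec; lra).
    assert (Hd : 0 < a + b' - m) by lra. set (d := a + b' - m) in *.
    assert (Hd' : d = a + b' - m) by reflexivity. clearbody d.
    destruct (approx_below a (d/2)) as [q [Hq1 Hq2]]; try lra.
    destruct (approx_below b' (d/2)) as [p [Hp1 Hp2]]; try lra.
    assert (Hs : qv q + qv p <= 1) by lra.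
    assert (le (c (qadd q p Hs)) (pl s t)).
    { apply Htrans with (pl (c q) (c p)). apply Hcpl; rewrite qv_qadd; reflexivity.
      apply Hpl.
      - destruct Hq2. apply I2; subst; lra. apply Hc0; auto.
      - destruct Hp2. apply I2; subst; lra. apply Hc0; auto. }
    apply I1 in H2. rewrite qv_qadd in H2. subst; lra.
Qed.

End Holder.

Open Scope R_scope.

Lemma exists_qmin (q p : Q01) : exists t : Q01, qv t = Rmin (qv q + qv p) 1.
Proof.
  destruct (Rle_dec (qv q + qv p) 1) as [H|H].
  - exists (qadd q p H). rewrite qv_qadd. unfold Rmin; destruct Rle_dec; lra.
  - exists q1. rewrite qv_q1. unfold Rmin; destruct Rle_dec; lra.
Qed.

Section SimpleHolder.
Variable S : MVSig.
Hypothesis HS : is_simple S.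
Variable c : Q01 -> S.
Hypothesis Hc0 : forall r : Q01, qv r = 0 -> c r = mzero.
Hypothesis Hcp : forall r s t : Q01, Rmin (qv r + qv s) 1 = qv t -> moplus (c r) (c s) = c t.
Hypothesis Hcn : forall r s : Q01, 1 - qv r = qv s -> mneg (c r) = c s.
Let HM : is_MV S := proj1 HS.

Lemma cst_1 t : qv t = 1 -> c t = mone.
Proof. intros H. unfold mone. rewrite <- (Hc0 q0 qv_q0). symmetry; apply Hcn. rewrite qv_q0; lra. Qed.

Lemma msum_cst (e : Q01) n : exists t : Q01, qv t = Rmin (INR n * qv e) 1 /\ msum S (c e) n = c t.
Proof.
  induction n.
  - exists q0. rewrite qv_q0, msum_0; auto. simpl. split. unfold Rmin; destruct Rle_dec; lra.
    symmetry; apply Hc0, qv_q0.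
  - destruct IHn as [t [Ht Et]]. destruct (exists_qmin e t) as [t' Ht'].
    exists t'. rewrite msum_S, Et; auto. split.
    + rewrite Ht', Ht, S_INR. pose proof (qv_bnd e). unfold Rmin; repeat destruct Rle_dec; nra.
    + apply Hcp; auto.
Qed.

Lemma mpow_1 n : mpow S mone n = mone.
Proof. induction n; simpl; auto. rewrite IHn, m1; auto. Qed.

Lemma cst_one t : c t = mone -> qv t = 1.
Proof.
  intros Ht. pose proof (qv_bnd t). apply NNPP; intros Hn.
  assert (E0 : c (qcompl t) = mzero).
  { rewrite <- (Hcn t (qcompl t)) by (rewrite qv_qcompl; lra). rewrite Ht. apply n1; auto. }
  destruct (INR_archimed (1 - qv t) 1) as [N HN]; [lra|].
  destruct (msum_cst (qcompl t) N) as [t' [Ht' Et']]. rewrite E0 in Et'.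
  unfold msum in Et'. rewrite n0 in Et'; auto. rewrite mpow_1, n1 in Et'; auto.
  rewrite qv_qcompl in Ht'. assert (qv t' = 1) by (rewrite Ht'; unfold Rmin; destruct Rle_dec; lra).
  pose proof (cst_1 t' H0). rewrite <- Et' in H1.
  pose proof HS as [_ [Hne _]]. auto.
Qed.

Lemma cst_le q p : mle (c q) (c p) -> qv q <= qv p.
Proof.
  intros H. apply Rnot_lt_le; intros Hlt. pose proof (qv_bnd q); pose proof (qv_bnd p).
  unfold mle in H. rewrite (Hcn q (qcompl q)) in H by (rewrite qv_qcompl; lra).
  destruct (exists_qmin (qcompl q) p) as [t Ht]. rewrite (Hcp _ _ t) in H by auto.
  apply cst_one in H. rewrite qv_qcompl in Ht. unfold Rmin in Ht; destruct Rle_dec in Ht; lra.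
Qed.

Lemma cst_mono q p : qv q <= qv p -> mle (c q) (c p).
Proof.
  intros H. pose proof (qv_bnd q); pose proof (qv_bnd p).
  unfold mle. rewrite (Hcn q (qcompl q)) by (rewrite qv_qcompl; lra).
  destruct (exists_qmin (qcompl q) p) as [t Ht]. rewrite (Hcp _ _ t) by auto.
  apply cst_1. rewrite Ht, qv_qcompl. unfold Rmin; destruct Rle_dec; lra.
Qed.

Definition siota : S -> I01 := iota S c (@mle S).

Lemma s_refl (x : S) : mle x x. Proof. apply le_refl; auto. Qed.
Lemma s_trans (x y z : S) : mle x y -> mle y z -> mle x z. Proof. apply le_trans; auto. Qed.
Lemma s_ng (x y : S) : mle x y -> mle (mneg y) (mneg x). Proof. apply n_anti; auto. Qed.
Lemma s_nn1 (x : S) : mle x (mneg (mneg x)). Proof. rewrite nn; auto; apply s_refl. Qed.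
Lemma s_nn2 (x : S) : mle (mneg (mneg x)) x. Proof. rewrite nn; auto; apply s_refl. Qed.
Lemma s_pl (x y x' y' : S) : mle x x' -> mle y y' -> mle (moplus x y) (moplus x' y'). Proof. apply plus_mono; auto. Qed.
Lemma s_c0 q (s : S) : qv q = 0 -> mle (c q) s. Proof. intros H; rewrite Hc0; auto; apply le_0; auto. Qed.
Lemma s_cng q p : qv p = 1 - qv q -> mle (mneg (c q)) (c p) /\ mle (c p) (mneg (c q)).
Proof. intros H; rewrite (Hcn q p) by lra; split; apply s_refl. Qed.
Lemma s_cpl q p t : qv t = qv q + qv p -> mle (moplus (c q) (c p)) (c t) /\ mle (c t) (moplus (c q) (c p)).
Proof.
  intros H. pose proof (qv_bnd t). rewrite (Hcp q p t) by (unfold Rmin; destruct Rle_dec; lra).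
  split; apply s_refl.
Qed.
Lemma s_comp q p (s : S) : qv q < qv p -> mle (c q) s \/ mle s (c p).
Proof.
  intros H. destruct (simple_chain S HS (c q) s) as [H1|H1]; auto.
  right. apply s_trans with (c q); auto. apply cst_mono; lra.
Qed.

Lemma siota_ng (s : S) : v01 (siota (mneg s)) = 1 - v01 (siota s).
Proof. exact (iota_ng S mneg c mle s_trans s_ng s_nn1 s_nn2 cst_le s_cng s_comp s). Qed.
Lemma siota_pl (s t : S) : v01 (siota (moplus s t)) = Rmin (v01 (siota s) + v01 (siota t)) 1.
Proof. exact (iota_pl S moplus c mle s_trans s_pl cst_le s_c0 s_cpl s_comp s t). Qed.
Lemma siota_cst q : v01 (siota (c q)) = qv q.
Proof. exact (iota_cst S c mle s_refl s_trans cst_le q). Qed.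
Lemma siota_I4 p (s : S) : v01 (siota s) < qv p -> mle s (c p).
Proof. exact (I4 S c mle s_comp p s). Qed.

Lemma siota_one (u : S) : v01 (siota u) = 1 -> u = mone.
Proof.
  intros Hu. apply NNPP; intros Hn. destruct (simple_nil S HS u Hn) as [n Hnil].
  assert (E1 : msum S (mneg u) n = mone).
  { unfold msum. rewrite nn, Hnil; auto. }
  assert (Hi : v01 (siota (mneg u)) = 0) by (rewrite siota_ng; lra).
  assert (HN : 0 < / (INR n + 1)) by (apply Rinv_0_lt_compat; pose proof (pos_INR n); lra).
  destruct (exQ01 0 (/ (INR n + 1))) as [e He]; try lra.
  assert (Hne : qv e * (INR n + 1) < 1).
  { assert (qv e * (INR n + 1) < / (INR n + 1) * (INR n + 1)).
    apply Rmult_lt_compat_r; [pose proof (pos_INR n); lra|lra].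
    rewrite Rinv_l in H; [lra|pose proof (pos_INR n); lra]. }
  assert (Hle : mle (mneg u) (c e)) by (apply siota_I4; lra).
  apply (msum_mono S HM _ _ n) in Hle. rewrite E1 in Hle.
  destruct (msum_cst e n) as [t [Ht Et]]. rewrite Et in Hle.
  apply le_1_eq in Hle; auto. apply cst_one in Hle.
  rewrite Ht in Hle. unfold Rmin in Hle; destruct Rle_dec in Hle; nra.
Qed.

Lemma siota_inj (s t : S) : v01 (siota s) = v01 (siota t) -> s = t.
Proof.
  intros E. pose proof (v01_bnd (siota s)). apply le_antisym; auto; apply siota_one.
  - rewrite siota_pl, siota_ng, E. unfold Rmin; destruct Rle_dec; lra.
  - rewrite siota_pl, siota_ng, E. unfold Rmin; destruct Rle_dec; lra.
Qed.

Lemma siota_0 : v01 (siota mzero) = 0.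
Proof. rewrite <- (Hc0 q0 qv_q0), siota_cst; apply qv_q0. Qed.

End SimpleHolder.

Open Scope R_scope.

Record ReprData (A : PSig) : Type := {
  rK : Type;
  rphi : A -> rK -> R;
  r_bnd : forall x k, 0 <= rphi x k <= 1;
  r_plus : forall x y k, rphi (moplus x y) k = Rmin (rphi x k + rphi y k) 1;
  r_neg : forall x k, rphi (mneg x) k = 1 - rphi x k;
  r_cst : forall q k, rphi (pcst q) k = qv q;
  r_zero : forall k, rphi mzero k = 0;
  r_inj : forall x y, (forall k, rphi x k = rphi y k) -> x = y }.

Lemma semisimple_repr (A : PSig) : is_Pavelka A -> semisimple A -> inhabited (ReprData A).
Proof.
  intros [HMV [HP0 [HPp HPn]]] [K [S [e [Hsimp [Hhom [Hinj _]]]]]].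
  set (c := fun k (q : Q01) => e (pcst q) k).
  assert (Hc0 : forall k r, qv r = 0 -> c k r = mzero).
  { intros k r H. unfold c. rewrite <- (HP0 r H). apply (Hhom k). }
  assert (Hcp : forall k r s t, Rmin (qv r + qv s) 1 = qv t -> moplus (c k r) (c k s) = c k t).
  { intros k r s t H. unfold c. rewrite <- (HPp r s t H). symmetry; apply (Hhom k). }
  assert (Hcn : forall k r s, 1 - qv r = qv s -> mneg (c k r) = c k s).
  { intros k r s H. unfold c. rewrite <- (HPn r s H). symmetry; apply (Hhom k). }
  constructor. refine {| rK := K; rphi := fun x k => v01 (siota (S k) (c k) (e x k)) |}.
  - intros; apply v01_bnd.
  - intros x y k. destruct (Hhom k) as [H1 [H2 H3]]. rewrite H1.
    apply siota_pl; auto.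
  - intros x k. destruct (Hhom k) as [H1 [H2 H3]]. rewrite H2.
    apply siota_ng; auto.
  - intros q k. apply (siota_cst (S k) (Hsimp k) (c k)); auto.
  - intros k. destruct (Hhom k) as [H1 [H2 H3]]. rewrite H3. apply siota_0; auto.
  - intros x y H. apply Hinj. intros k. apply (siota_inj (S k) (Hsimp k) (c k)); auto.
Qed.

Ltac rmm := unfold Rmin, Rmax in *; repeat destruct Rle_dec; lra.

Section Pointwise.
Variable A : PSig.
Variable RD : ReprData A.
Local Notation f := (rphi A RD).
Let rn := r_neg A RD. Let rp := r_plus A RD. Let rz := r_zero A RD. Let ri := r_inj A RD.

Lemma r_one k : f mone k = 1.
Proof. unfold mone. rewrite rn, rz; lra. Qed.
Lemma r_mul x y k : f (mmul x y) k = Rmax 0 (f x k + f y k - 1).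
Proof. unfold mmul. rewrite rn, rp, !rn. pose proof (r_bnd A RD x k); pose proof (r_bnd A RD y k). rmm. Qed.
Lemma r_arrow x y k : f (marrow x y) k = Rmin 1 (1 - f x k + f y k).
Proof. unfold marrow. rewrite rp, rn. pose proof (r_bnd A RD x k); pose proof (r_bnd A RD y k). rmm. Qed.
Lemma r_join x y k : f (mjoin x y) k = Rmax (f x k) (f y k).
Proof. unfold mjoin. rewrite rp, rn, rp, rn. pose proof (r_bnd A RD x k); pose proof (r_bnd A RD y k). rmm. Qed.
Lemma r_meet x y k : f (mmeet x y) k = Rmin (f x k) (f y k).
Proof. unfold mmeet. rewrite rn, r_join, !rn. pose proof (r_bnd A RD x k); pose proof (r_bnd A RD y k). rmm. Qed.
Lemma r_le x y : mle x y <-> forall k, f x k <= f y k.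
Proof.
  unfold mle. split.
  - intros H k. assert (E : f (moplus (mneg x) y) k = f mone k) by (rewrite H; auto).
    rewrite rp, rn, r_one in E. pose proof (r_bnd A RD x k); pose proof (r_bnd A RD y k). rmm.
  - intros H. apply ri. intros k. rewrite rp, rn, r_one. specialize (H k).
    pose proof (r_bnd A RD x k); pose proof (r_bnd A RD y k). rmm.
Qed.
Lemma r_pow x n k : f (mpow A x n) k = Rmax 0 (INR n * f x k - (INR n - 1)).
Proof.
  pose proof (r_bnd A RD x k). induction n.
  - simpl mpow. rewrite r_one. simpl. rmm.
  - simpl mpow. rewrite r_mul, IHn, S_INR. pose proof (pos_INR n).
    unfold Rmax; repeat destruct Rle_dec; nra.
Qed.
End Pointwise.

Open Scope R_scope.

Section Filters.
Variable A : PSig.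
Variable RD : ReprData A.
Hypothesis HP : is_Pavelka A.
Let HM : is_MV A := proj1 HP.
Local Notation f := (rphi A RD).
Let rb := r_bnd A RD.

Lemma filt_up F (x y : A) : is_filter A F -> F x -> mle x y -> F y.
Proof. intros [_ [H _]] Hx Hxy; eauto. Qed.
Lemma filt_mul F (x y : A) : is_filter A F -> F x -> F y -> F (mmul x y).
Proof. intros [_ [_ H]]; eauto. Qed.
Lemma filt_one F : is_filter A F -> F mone.
Proof. intros HF. pose proof HF as [[x Hx] _]. apply filt_up with x; auto. apply le_1; auto. Qed.
Lemma filt_pow F (x : A) n : is_filter A F -> F x -> F (mpow A x n).
Proof. intros HF Hx. induction n; simpl. apply filt_one; auto. apply filt_mul; auto. Qed.
Lemma proper_0 F : is_proper_filter A F -> ~ F mzero.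
Proof. intros [HF [x Hx]] H0. apply Hx, filt_up with mzero; auto. apply le_0; auto. Qed.

Lemma small_not_in F (z : A) v : is_proper_filter A F -> v < 1 -> (forall k, f z k <= v) -> ~ F z.
Proof.
  intros HF Hv Hz Fz. destruct (INR_archimed (1 - v) 1) as [n Hn]; [lra|].
  apply (proper_0 F HF). apply filt_up with (mpow A z n); [apply HF|apply filt_pow; auto; apply HF|].
  apply (r_le A RD). intros k. rewrite r_pow, r_zero. specialize (Hz k). pose proof (pos_INR n).
  assert (INR n * f z k <= INR n * v) by (apply Rmult_le_compat_l; auto).
  unfold Rmax; destruct Rle_dec; nra.
Qed.

Definition genF (F : A -> Prop) (u : A) : A -> Prop :=
  fun z => exists g, F g /\ exists n, mle (mmul g (mpow A u n)) z.

Lemma mul4 (a b c d : A) : mmul (mmul a b) (mmul c d) = mmul (mmul a c) (mmul b d).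
Proof. rewrite <- !(mA A HM), (mA A HM b c d), (mC A HM b c), <- (mA A HM c b d); reflexivity. Qed.

Lemma genF_filter F u : is_filter A F -> is_filter A (genF F u).
Proof.
  intros HF. split; [|split].
  - exists mone, mone. split; [apply filt_one; auto|]. exists O. apply le_1; auto.
  - intros x y [g [Hg [n Hn]]] Hxy. exists g; split; auto; exists n. eapply le_trans; eauto.
  - intros x y [g1 [Hg1 [n1 Hn1]]] [g2 [Hg2 [n2 Hn2]]]. exists (mmul g1 g2). split; [apply filt_mul; auto|].
    exists (n1 + n2)%nat. rewrite mpow_add, mul4; auto. apply mul_mono; auto.
Qed.

Lemma genF_sup F u x : F x -> genF F u x.
Proof. intros Hx. exists x. split; auto. exists O. simpl. rewrite m1; auto. apply le_refl; auto. Qed.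
Lemma genF_u F u : is_filter A F -> genF F u u.
Proof.
  intros HF. exists mone. split; [apply filt_one; auto|]. exists 1%nat. simpl.
  rewrite m1, mC, m1; auto. apply le_refl; auto.
Qed.

Lemma max_gen F u : is_maximal_filter A F -> ~ F u ->
  exists g, F g /\ exists n, mmul g (mpow A u n) = mzero.
Proof.
  intros [HF Hmax] Hu. assert (HG := genF_filter F u (proj1 HF)).
  destruct (classic (exists x, ~ genF F u x)) as [Hp|Hp].
  - exfalso. apply Hu. apply (Hmax (genF F u)); [split; auto|apply genF_sup|apply genF_u, HF].
  - assert (genF F u mzero) as [g [Hg [n Hn]]].
    { apply NNPP; intros H; apply Hp; eauto. }
    exists g; split; auto; exists n. apply le_0_eq; auto.
Qed.

Lemma max_prime F (x y : A) : is_maximal_filter A F -> F (marrow x y) \/ F (marrow y x).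
Proof.
  intros HF. destruct (classic (F (marrow x y))) as [H|H]; auto.
  destruct (classic (F (marrow y x))) as [H'|H']; auto. exfalso.
  destruct (max_gen F _ HF H) as [g1 [Hg1 [n1 E1]]].
  destruct (max_gen F _ HF H') as [g2 [Hg2 [n2 E2]]].
  apply (proper_0 F (proj1 HF)). replace mzero with (mmul g1 g2); [apply filt_mul; auto; apply HF|].
  apply (r_inj A RD). intros k. rewrite r_mul, r_zero.
  assert (Z1 := f_equal (fun z => f z k) E1). assert (Z2 := f_equal (fun z => f z k) E2). simpl in Z1, Z2.
  rewrite r_mul, r_pow, r_arrow, r_zero in Z1, Z2.
  pose proof (rb g1 k); pose proof (rb g2 k); pose proof (rb x k); pose proof (rb y k).
  destruct (Rle_dec (f x k) (f y k)).
  - assert (E5 : Rmin 1 (1 - f x k + f y k) = 1) by rmm. rewrite E5 in Z1.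
    replace (INR n1 * 1 - (INR n1 - 1)) with 1 in Z1 by ring. rmm.
  - assert (E5 : Rmin 1 (1 - f y k + f x k) = 1) by rmm. rewrite E5 in Z2.
    replace (INR n2 * 1 - (INR n2 - 1)) with 1 in Z2 by ring. rmm.
Qed.

End Filters.

Open Scope R_scope.

Section MaxF.
Variable A : PSig.
Variable RD : ReprData A.
Hypothesis HP : is_Pavelka A.
Let HM : is_MV A := proj1 HP.
Local Notation f := (rphi A RD).
Let rb := r_bnd A RD.
Variable F : A -> Prop.
Hypothesis HF : is_maximal_filter A F.
Let HF1 : is_filter A F := proj1 (proj1 HF).

Lemma F_one (z : A) : (forall k, f z k = 1) -> F z.
Proof.
  intros H. apply filt_up with mone; auto. apply filt_one; auto.
  apply (r_le A RD). intros k. rewrite r_one, H; lra.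
Qed.
Lemma F_ineq1 (a z : A) : F a -> (forall k, f a k <= f z k) -> F z.
Proof. intros Ha H. apply filt_up with a; auto. apply (r_le A RD); auto. Qed.
Lemma F_ineq2 (a b z : A) : F a -> F b -> (forall k, Rmax 0 (f a k + f b k - 1) <= f z k) -> F z.
Proof.
  intros Ha Hb H. apply F_ineq1 with (mmul a b). apply filt_mul; auto.
  intros k; rewrite r_mul; auto.
Qed.

Definition leF (x y : A) : Prop := F (marrow x y).

Lemma lF_refl x : leF x x.
Proof. apply F_one; intros k; rewrite r_arrow; rmm. Qed.
Lemma lF_trans x y z : leF x y -> leF y z -> leF x z.
Proof.
  intros H1 H2. apply (F_ineq2 _ _ _ H1 H2). intros k. rewrite !r_arrow.
  pose proof (rb x k); pose proof (rb y k); pose proof (rb z k). rmm.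
Qed.
Lemma lF_ng x y : leF x y -> leF (mneg y) (mneg x).
Proof. intros H. apply (F_ineq1 _ _ H). intros k. rewrite !r_arrow, !r_neg. rmm. Qed.
Lemma lF_nn1 x : leF x (mneg (mneg x)).
Proof. apply F_one; intros k; rewrite r_arrow, !r_neg; rmm. Qed.
Lemma lF_nn2 x : leF (mneg (mneg x)) x.
Proof. apply F_one; intros k; rewrite r_arrow, !r_neg; rmm. Qed.
Lemma lF_pl x y x' y' : leF x x' -> leF y y' -> leF (moplus x y) (moplus x' y').
Proof.
  intros H1 H2. apply (F_ineq2 _ _ _ H1 H2). intros k. rewrite !r_arrow, !r_plus.
  pose proof (rb x k); pose proof (rb y k); pose proof (rb x' k); pose proof (rb y' k). rmm.
Qed.
Lemma lF_cle q p : leF (pcst q) (pcst p) -> qv q <= qv p.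
Proof.
  intros H. apply Rnot_lt_le; intros Hlt. pose proof (qv_bnd q); pose proof (qv_bnd p).
  apply (small_not_in A RD HP F _ (1 - qv q + qv p) (proj1 HF)) in H; auto; [lra|].
  intros k. rewrite r_arrow, !r_cst. rmm.
Qed.
Lemma lF_c0 q s : qv q = 0 -> leF (pcst q) s.
Proof. intros H. apply F_one; intros k; rewrite r_arrow, r_cst. pose proof (rb s k). rmm. Qed.
Lemma lF_cng q p : qv p = 1 - qv q -> leF (mneg (pcst q)) (pcst p) /\ leF (pcst p) (mneg (pcst q)).
Proof. intros H. split; apply F_one; intros k; rewrite r_arrow, r_neg, r_cst, r_cst; rmm. Qed.
Lemma lF_cpl q p t : qv t = qv q + qv p ->
  leF (moplus (pcst q) (pcst p)) (pcst t) /\ leF (pcst t) (moplus (pcst q) (pcst p)).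
Proof.
  intros H. pose proof (qv_bnd t); pose proof (qv_bnd q); pose proof (qv_bnd p).
  split; apply F_one; intros k; rewrite r_arrow, r_plus, !r_cst; rmm.
Qed.
Lemma lF_comp q p s : qv q < qv p -> leF (pcst q) s \/ leF s (pcst p).
Proof.
  intros H. destruct (max_prime A RD HP F (pcst q) s HF) as [H1|H1]; [left; auto|right].
  apply (F_ineq1 _ _ H1). intros k. rewrite !r_arrow, !r_cst. rmm.
Qed.

Definition phiF : A -> I01 := iota A pcst leF.

Lemma phiF_pl x y : phiF (moplus x y) = i01_oplus (phiF x) (phiF y).
Proof.
  apply I01_eq. exact (iota_pl A moplus pcst leF lF_trans lF_pl lF_cle lF_c0 lF_cpl lF_comp x y).
Qed.
Lemma phiF_ng x : phiF (mneg x) = i01_neg (phiF x).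
Proof.
  apply I01_eq. exact (iota_ng A mneg pcst leF lF_trans lF_ng lF_nn1 lF_nn2 lF_cle lF_cng lF_comp x).
Qed.
Lemma phiF_cst q : phiF (pcst q) = i01_cst q.
Proof. apply I01_eq. exact (iota_cst A pcst leF lF_refl lF_trans lF_cle q). Qed.
Lemma phiF_0 : phiF mzero = i01_zero.
Proof.
  pose proof HP as [_ [HP0 _]]. rewrite (HP0 q0 qv_q0), phiF_cst. apply I01_eq. apply qv_q0.
Qed.

Lemma phiF_ker a : F a <-> phiF a = @mone std01.
Proof.
  split.
  - intros Ha. apply I01_eq.
    change (v01 (@mone std01)) with (1 - 0). rewrite Rminus_0_r.
    apply Rle_antisym; [apply (v01_bnd (phiF a))|].
    rewrite <- qv_q1. apply (I1 A pcst leF). apply (F_ineq1 _ _ Ha). intros k.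
    rewrite r_arrow, r_cst, qv_q1. pose proof (rb a k). rmm.
  - intros E. assert (Ev : v01 (phiF a) = 1) by (rewrite E; simpl; lra).
    apply NNPP; intros Hn. destruct (max_gen A HP F a HF Hn) as [g [Hg [n Hgn]]].
    pose proof (pos_INR n).
    destruct (exQ01 (1 - / (INR n + 1)) 1) as [q Hq].
    { assert (0 < / (INR n + 1)) by (apply Rinv_0_lt_compat; lra). lra. }
    { assert (0 < / (INR n + 1)) by (apply Rinv_0_lt_compat; lra). lra. }
    { lra. }
    assert (Hlq : leF (pcst q) a).
    { apply (I2 A pcst leF lF_trans lF_cle lF_comp). fold phiF. lra. }
    assert (Hv : INR n * (1 - qv q) < 1).
    { assert (INR n * (1 - qv q) < INR n * / (INR n + 1) + / (INR n + 1)).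
      { destruct (Req_dec (INR n) 0) as [Z|Z]. rewrite Z. assert (0 < / (INR n + 1)) by (apply Rinv_0_lt_compat; lra). lra.
        assert (INR n * (1 - qv q) < INR n * / (INR n + 1)) by (apply Rmult_lt_compat_l; lra).
        assert (0 < / (INR n + 1)) by (apply Rinv_0_lt_compat; lra). lra. }
      replace (INR n * / (INR n + 1) + / (INR n + 1)) with 1 in H0 by (field; lra). auto. }
    apply (small_not_in A RD HP F (mmul g (mpow A (marrow (pcst q) a) n)) (INR n * (1 - qv q)) (proj1 HF)); auto.
    + intros k. assert (Z := f_equal (fun z => f z k) Hgn). simpl in Z.
      rewrite r_mul, r_pow, r_zero in Z. rewrite r_mul, r_pow, r_arrow, r_cst.
      pose proof (rb g k); pose proof (rb a k); pose proof (qv_bnd q).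
      set (N := INR n) in *. set (G := f g k) in *. set (X := f a k) in *.
      assert (Hm : Rmin 1 (1 - qv q + X) <= 1 - qv q + X) by rmm.
      assert (Hm' : N * Rmin 1 (1 - qv q + X) <= N * (1 - qv q + X)) by (apply Rmult_le_compat_l; lra).
      assert (Hm1 : Rmin 1 (1 - qv q + X) <= 1) by rmm.
      assert (G + N * X - N <= 0). { unfold Rmax in Z; destruct (Rle_dec 0 (N * X - (N - 1))) as [z1|z1]; destruct Rle_dec as [z2|z2] in Z; try lra. }
      set (W := Rmin 1 (1 - qv q + X)) in *. unfold Rmax. destruct (Rle_dec 0 (N * W - (N - 1))); destruct Rle_dec; nra.
    + apply filt_mul; auto. apply filt_pow; auto.
Qed.

Lemma exists_phom : exists phi : A -> I01, is_Phom A std01 phi /\ (forall a, F a <-> phi a = @mone std01).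
Proof.
  exists phiF. split; [|apply phiF_ker].
  split; [split; [|split]|].
  - apply phiF_pl.
  - apply phiF_ng.
  - apply phiF_0.
  - apply phiF_cst.
Qed.

End MaxF.

Open Scope R_scope.

Lemma zorn_plain (T : Type) (P : (T -> Prop) -> Prop) :
  (forall Fm : (T -> Prop) -> Prop, (forall X, Fm X -> P X) ->
     (forall X Y, Fm X -> Fm Y -> (forall t, X t -> Y t) \/ (forall t, Y t -> X t)) ->
     P (fun a => exists X, Fm X /\ X a)) ->
  exists A0, P A0 /\ forall B, (forall t, A0 t -> B t) -> ~ (forall t, B t -> A0 t) -> ~ P B.
Proof.
  intros H. destruct (@classical_sets.Zorn_bigcup T P) as [A0 [HA HB]].
  - intros Fm HFm Htot.
    replace (classical_sets.bigcup Fm (fun X => X)) with (fun a => exists X, Fm X /\ X a).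
    + apply H; [exact HFm|]. intros X Y HX HY. destruct (Htot X Y HX HY); auto.
    + apply functional_extensionality; intros a. apply propositional_extensionality.
      unfold classical_sets.bigcup. simpl.
      split. intros [X [H1 H2]]; exists X; auto. intros [X H1 H2]; exists X; auto.
  - exists A0; split; auto. intros B H1 H2 H3. apply (HB B); auto. split; auto.
Qed.

Section Ext.
Variable A : PSig.
Hypothesis HP : is_Pavelka A.
Let HM : is_MV A := proj1 HP.

Lemma proper_of (G : A -> Prop) : is_filter A G -> ~ G mzero -> is_proper_filter A G.
Proof. intros H1 H2; split; auto; exists mzero; auto. Qed.

Lemma filter_ext (P1 P2 : A -> Prop) : (forall a, P1 a <-> P2 a) -> is_proper_filter A P1 -> is_proper_filter A P2.
Proof.
  intros E [[[x Hx] [Hu Hm]] [y Hy]]. split; [split; [|split]|].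
  - exists x; apply E; auto.
  - intros a b Ha Hab; apply E; apply E in Ha; eauto.
  - intros a b Ha Hb; apply E; apply E in Ha; apply E in Hb; eauto.
  - exists y; intros Hy'; apply Hy, E; auto.
Qed.

Lemma ext_max (H : A -> Prop) : is_proper_filter A H ->
  exists F, is_maximal_filter A F /\ forall x, H x -> F x.
Proof.
  intros HH. set (P := fun X : A -> Prop => is_proper_filter A (fun a => X a \/ H a)).
  destruct (zorn_plain A P) as [A0 [HA0 Hmax]].
  - intros Fm HFm Htot. apply proper_of.
    + split; [|split].
      * destruct HH as [[[x Hx] _] _]. exists x; auto.
      * intros a b [[X [HX Ha]]|Ha] Hab.
        -- destruct (HFm X HX) as [[_ [Hu _]] _]. destruct (Hu a b (or_introl Ha) Hab) as [Hb|Hb]; eauto.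
        -- right. destruct HH as [[_ [Hu _]] _]. eauto.
      * intros a b [[X [HX Ha]]|Ha] [[Y [HY Hb]]|Hb].
        -- destruct (Htot X Y HX HY) as [S|S].
           ++ destruct (HFm Y HY) as [[_ [_ Hm]] _]. destruct (Hm a b (or_introl (S a Ha)) (or_introl Hb)); eauto.
           ++ destruct (HFm X HX) as [[_ [_ Hm]] _]. destruct (Hm a b (or_introl Ha) (or_introl (S b Hb))); eauto.
        -- destruct (HFm X HX) as [[_ [_ Hm]] _]. destruct (Hm a b (or_introl Ha) (or_intror Hb)); eauto.
        -- destruct (HFm Y HY) as [[_ [_ Hm]] _]. destruct (Hm a b (or_intror Ha) (or_introl Hb)); eauto.
        -- right. destruct HH as [[_ [_ Hm]] _]. eauto.
    + intros [[X [HX H0]]|H0].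
      * apply (proper_0 A HP _ (HFm X HX)). auto.
      * apply (proper_0 A HP _ HH). auto.
  - exists (fun a => A0 a \/ H a). split; [split; auto|].
    + intros G HG HsubG x Gx.
      assert (PG : P G).
      { apply (filter_ext G); auto. intros a; split; auto. intros [|]; auto. }
      destruct (classic (forall t, G t -> A0 t)) as [Hs|Hs].
      * left; auto.
      * exfalso. apply (Hmax G); auto.
    + intros x Hx; right; auto.
Qed.
End Ext.

Lemma quot_spec (A : PSig) (RD : ReprData A) (HP : is_Pavelka A) (F : SpecM A) :
  is_Phom A std01 (quot_hom A F) /\ (forall a, proj1_sig F a <-> quot_hom A F a = @mone std01).
Proof.
  unfold quot_hom. apply epsilon_spec. apply (exists_phom A RD HP). apply (proj2_sig F).
Qed.

Open Scope R_scope.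

Lemma std_arrow_v (a b : I01) : v01 (@marrow std01 a b) = Rmin 1 (1 - v01 a + v01 b).
Proof. unfold marrow; simpl. pose proof (v01_bnd a); pose proof (v01_bnd b). unfold v01 in *; simpl. rmm. Qed.
Lemma std_mul_v (a b : I01) : v01 (@mmul std01 a b) = Rmax 0 (v01 a + v01 b - 1).
Proof. unfold mmul; simpl. pose proof (v01_bnd a); pose proof (v01_bnd b). unfold v01 in *; simpl. rmm. Qed.

Section Quot.
Variable A : PSig.
Variable RD : ReprData A.
Hypothesis HP : is_Pavelka A.
Let HM : is_MV A := proj1 HP.
Variable F : SpecM A.
Local Notation qa x := (v01 (quot A x F)).
Let QS := quot_spec A RD HP F.

Lemma q_bnd x : 0 <= qa x <= 1. Proof. apply v01_bnd. Qed.
Lemma q_plus x y : qa (moplus x y) = Rmin (qa x + qa y) 1.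
Proof. unfold quot. destruct QS as [[[H1 _] _] _]. rewrite H1. reflexivity. Qed.
Lemma q_neg x : qa (mneg x) = 1 - qa x.
Proof. unfold quot. destruct QS as [[[_ [H2 _]] _] _]. rewrite H2. reflexivity. Qed.
Lemma q_zero : qa mzero = 0.
Proof. unfold quot. destruct QS as [[[_ [_ H3]] _] _]. rewrite H3. reflexivity. Qed.
Lemma q_cst r : qa (pcst r) = qv r.
Proof. unfold quot. destruct QS as [[_ H4] _]. rewrite H4. reflexivity. Qed.
Lemma q_one : qa mone = 1.
Proof. unfold mone. rewrite q_neg, q_zero; lra. Qed.
Lemma q_mul x y : qa (mmul x y) = Rmax 0 (qa x + qa y - 1).
Proof. unfold mmul. rewrite q_neg, q_plus, !q_neg. pose proof (q_bnd x); pose proof (q_bnd y). rmm. Qed.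
Lemma q_arrow x y : qa (marrow x y) = Rmin 1 (1 - qa x + qa y).
Proof. unfold marrow. rewrite q_plus, q_neg. pose proof (q_bnd x); pose proof (q_bnd y). rmm. Qed.
Lemma q_mono x y : mle x y -> qa x <= qa y.
Proof.
  unfold mle; intros H. assert (E := f_equal (fun z => qa z) H). simpl in E.
  rewrite q_plus, q_neg, q_one in E. pose proof (q_bnd x); pose proof (q_bnd y). rmm.
Qed.
Lemma q_ker a : proj1_sig F a <-> qa a = 1.
Proof.
  destruct QS as [_ H]. rewrite H. split; intros E.
  - unfold quot; rewrite E; simpl; lra.
  - apply I01_eq. unfold quot in E; rewrite E. simpl; lra.
Qed.
End Quot.

Open Scope R_scope.

Lemma mpow_mono (M : MVSig) (HM : is_MV M) (x y : M) n : mle x y -> mle (mpow M x n) (mpow M y n).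
Proof. intros H; induction n; simpl. apply le_refl; auto. apply mul_mono; auto. Qed.

Section MainD.
Variables A B : PSig.
Variable RDA : ReprData A.
Variable RDB : ReprData B.
Hypothesis HPA : is_Pavelka A.
Hypothesis HPB : is_Pavelka B.
Let HMA : is_MV A := proj1 HPA.
Let HMB : is_MV B := proj1 HPB.
Variables (d : A -> B) (h : B -> A).
Hypothesis Hg : galois A B d h.
Local Notation qa x F := (v01 (quot A x F)).
Local Notation qb z G := (v01 (quot B z G)).

Lemma d_anti (x y : A) : mle x y -> mle (d y) (d x). Proof. apply Hg. Qed.
Lemma d_adj (y : A) (x : B) : mle x (d y) <-> mle y (h x). Proof. apply Hg. Qed.
Lemma d_cst r (x : A) : marrow (pcst r) (d x) = d (mmul (pcst r) x). Proof. apply Hg. Qed.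

Lemma d_zero : d mzero = mone.
Proof. apply le_1_eq; auto. apply d_adj. apply le_0; auto. Qed.

Lemma d_join (b1 b2 : A) : mle (mmeet (d b1) (d b2)) (d (mjoin b1 b2)).
Proof.
  apply d_adj. apply join_lub; auto; apply d_adj.
  apply meet_lb_l; auto. apply meet_lb_r; auto.
Qed.

Lemma main_d (x : A) : nat_emb B (d x) = dR (Rel_of A B d) (nat_emb A x).
Proof.
  apply functional_extensionality; intros G. apply I01_eq. unfold nat_emb, dR.
  set (t := qb (d x) G).
  set (Rv := fun F => v01 (Rel_of A B d F G)).
  assert (Hterm : forall F a, Rmax 0 (qb (d a) G + qa a F - 1) <= Rv F).
  { intros F a. unfold Rv, Rel_of.
    pose proof (sup01_ub (fun a : A => @mmul std01 (quot B (d a) G) (quot A a F)) a) as H.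
    cbv beta in H. rewrite std_mul_v in H. exact H. }
  set (m := v01 (inf01 (fun F => @marrow std01 (quot A x F) (Rel_of A B d F G)))).
  assert (Hinf : forall F, m <= Rmin 1 (1 - qa x F + Rv F)).
  { intros F. unfold m, Rv. rewrite <- std_arrow_v. apply (inf01_lb (fun F => @marrow std01 (quot A x F) (Rel_of A B d F G))). }
  assert (Ht : 0 <= t <= 1) by apply v01_bnd.
  assert (Hm : 0 <= m <= 1) by apply v01_bnd.
  apply Rle_antisym.
  - unfold m. apply inf01_glb; [lra|]. intros F. rewrite std_arrow_v. fold (Rv F).
    pose proof (Hterm F x). fold t in H. pose proof (q_bnd A F x). rmm.
  - apply Rnot_lt_le; intros Hlt.
    destruct (exQ01 t m) as [s Hs]; try lra.
    destruct (exQ01 (qv s) m) as [r Hr]; try lra.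
    pose proof (qv_bnd s) as Hsb. pose proof (qv_bnd r) as Hrb.
    set (Gp := proj1_sig G).
    set (y := mmul (pcst s) x).
    set (w := marrow (pcst (qcompl s)) x).
    set (P := fun b : A => Gp (d b)).
    set (u := fun b : A => mmul (marrow b y) w).
    set (H0 := fun z : A => exists b, P b /\ exists n, mle (mpow A (u b) n) z).
    assert (HGf : is_filter B Gp) by (apply (proj2_sig G)).
    assert (Hnot_y : ~ P y).
    { unfold P, y. rewrite <- d_cst. intros Hin. apply (q_ker B RDB HPB G) in Hin.
      rewrite q_arrow, q_cst in Hin; auto. fold t in Hin. rmm. }
    assert (HPjoin : forall b1 b2, P b1 -> P b2 -> P (mjoin b1 b2)).
    { intros b1 b2 H1 H2. unfold P in *. apply filt_up with (mmeet (d b1) (d b2)); auto; [|apply d_join].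
      apply filt_up with (mmul (d b1) (d b2)); auto. apply filt_mul; auto.
      apply meet_glb; auto. apply mul_le; auto. rewrite mC; auto; apply mul_le; auto. }
    assert (Hu_mono : forall b b', mle b b' -> mle (u b') (u b)).
    { intros b b' Hbb. unfold u. apply mul_mono; auto; [|apply le_refl; auto].
      unfold marrow. apply plus_mono; auto; [|apply le_refl; auto]. apply n_anti; auto. }
    assert (HH0 : is_proper_filter A H0).
    { apply proper_of; auto. split; [|split].
      - exists mone, mzero. split. unfold P. rewrite d_zero. apply filt_one; auto.
        exists O. simpl. apply le_refl; auto.
      - intros a b [b0 [Hb0 [n Hn]]] Hab. exists b0. split; auto. exists n. apply (le_trans A HMA _ a); auto.
      - intros a b [b1 [Hb1 [n1 Hn1]]] [b2 [Hb2 [n2 Hn2]]]. exists (mjoin b1 b2). split; auto.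
        exists (n1 + n2)%nat. rewrite mpow_add; auto. apply mul_mono; auto.
        + apply (le_trans A HMA _ (mpow A (u b1) n1)); auto. apply mpow_mono; auto. apply Hu_mono, join_ub_l; auto.
        + apply (le_trans A HMA _ (mpow A (u b2) n2)); auto. apply mpow_mono; auto. apply Hu_mono, join_ub_r; auto.
      - intros [b [Hb [n Hn]]]. apply Hnot_y.
        assert (Hyb : mle y b).
        { apply (r_le A RDA). intros k. apply le_0_eq in Hn; auto.
          assert (Z := f_equal (fun z => rphi A RDA z k) Hn). simpl in Z.
          unfold u, y, w in Z. rewrite r_pow, r_mul, !r_arrow, r_mul, !r_cst, r_zero, qv_qcompl in Z.
          unfold y. rewrite r_mul, r_cst.
          pose proof (r_bnd A RDA x k); pose proof (r_bnd A RDA b k).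
          set (X := rphi A RDA x k) in *. set (Bv := rphi A RDA b k) in *.
          destruct (Rle_dec (1 - qv s) X) as [Hx|Hx].
          - assert (E1 : Rmin 1 (1 - (1 - qv s) + X) = 1) by rmm. rewrite E1 in Z.
            set (U := Rmin 1 (1 - Bv + Rmax 0 (qv s + X - 1))) in *.
            assert (HU : U < 1).
            { apply Rnot_ge_lt; intros HU. assert (EU : U = 1) by (unfold U in *; rmm).
              rewrite EU in Z. replace (Rmax 0 (1 + 1 - 1)) with 1 in Z by rmm.
              replace (INR n * 1 - (INR n - 1)) with 1 in Z by ring. rmm. }
            unfold U in HU. rmm.
          - rmm. }
        unfold P in *. apply filt_up with (d b); auto. apply d_anti; auto. }
    destruct (ext_max A HPA H0 HH0) as [F0 [HF0 HsubF]].
    set (F := exist _ F0 HF0 : SpecM A).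
    assert (Hby : forall b, P b -> qa b F <= qa y F).
    { intros b Hb. assert (Hin : F0 (marrow b y)).
      { apply HsubF. exists b. split; auto. exists 1%nat. simpl. rewrite m1; auto. unfold u. apply mul_le; auto. }
      apply (q_ker A RDA HPA F) in Hin. rewrite q_arrow in Hin; auto.
      pose proof (q_bnd A F b); pose proof (q_bnd A F y). rmm. }
    assert (Hw : 1 - qv s <= qa x F).
    { assert (Hin : F0 w).
      { apply HsubF. exists mzero. split. unfold P. rewrite d_zero. apply filt_one; auto.
        exists 1%nat. simpl. rewrite m1; auto. unfold u. rewrite mC; auto. apply mul_le; auto. }
      apply (q_ker A RDA HPA F) in Hin. unfold w in Hin. rewrite q_arrow, q_cst, qv_qcompl in Hin; auto.
      pose proof (q_bnd A F x). rmm. }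
    assert (HyF : qa y F = qv s + qa x F - 1).
    { unfold y. rewrite q_mul, q_cst; auto. rmm. }
    assert (HR : Rv F <= qa y F).
    { unfold Rv, Rel_of. apply sup01_lub. pose proof (q_bnd A F x); lra.
      intros a. rewrite std_mul_v. apply Rnot_lt_le; intros Hc.
      set (psi := qb (d a) G) in *. set (aF := qa a F) in *.
      pose proof (v01_bnd (quot B (d a) G)). pose proof (q_bnd A F a).
      assert (Hc' : psi + aF - 1 > qa y F) by (fold psi aF in Hc; unfold psi, aF in *; rmm).
      destruct (exQ01 (qa y F + 1 - aF) psi) as [sg Hsg]; try (unfold psi, aF in *; lra).
      assert (HP1 : P (mmul (pcst sg) a)).
      { unfold P. rewrite <- d_cst. apply (q_ker B RDB HPB G). rewrite q_arrow, q_cst; auto.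
        fold psi. pose proof (qv_bnd sg). rmm. }
      apply Hby in HP1. rewrite q_mul, q_cst in HP1; auto. fold aF in HP1. rmm. }
    pose proof (Hinf F). rewrite HyF in HR. rmm.
Qed.

End MainD.

Open Scope R_scope.

Lemma galois_sym (A B : PSig) (HPA : is_Pavelka A) (HPB : is_Pavelka B) d h :
  galois A B d h -> galois B A h d.
Proof.
  intros [Hd [Hh [Hadj Hc]]]. pose proof (proj1 HPA) as HMA. pose proof (proj1 HPB) as HMB.
  split; [auto|split; [auto|split]].
  - intros y x. rewrite Hadj. tauto.
  - intros r y. apply le_antisym; auto.
    + set (z := marrow (pcst r) (h y)). apply Hadj. rewrite mC; auto. apply resid; auto.
      change (mle y (marrow (pcst r) (d z))). rewrite Hc. apply Hadj.
      rewrite mC; auto. apply resid; auto. apply le_refl; auto.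
    + set (X := h (mmul (pcst r) y)). unfold marrow. apply resid; auto. rewrite mC; auto.
      apply Hadj. rewrite <- Hc. unfold marrow. apply resid; auto. rewrite mC; auto.
      apply Hadj. apply le_refl; auto.
Qed.

Lemma rel_sym (A B : PSig) (RDA : ReprData A) (RDB : ReprData B) (HPA : is_Pavelka A) (HPB : is_Pavelka B) d h :
  galois A B d h -> forall F G, Rel_of B A h G F = Rel_of A B d F G.
Proof.
  intros Hg F G. pose proof (galois_sym A B HPA HPB d h Hg) as Hg'.
  assert (Hle : forall (A B : PSig) (RDA : ReprData A) (RDB : ReprData B) (HPA : is_Pavelka A) (HPB : is_Pavelka B) d h,
            galois A B d h -> forall F G, v01 (Rel_of A B d F G) <= v01 (Rel_of B A h G F)).
  { clear. intros A B RDA RDB HPA HPB d h [Hd [Hh [Hadj Hc]]] F G. unfold Rel_of.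
    apply sup01_lub; [apply v01_bnd|]. intros a. rewrite std_mul_v.
    pose proof (sup01_ub (fun b : B => @mmul std01 (quot A (h b) F) (quot B b G)) (d a)) as H.
    cbv beta in H. rewrite std_mul_v in H.
    assert (Ha : mle a (h (d a))) by (apply Hadj; apply le_refl; apply HPB).
    apply (q_mono A RDA HPA F) in Ha. rmm. }
  apply I01_eq. apply Rle_antisym; [apply (Hle B A RDB RDA HPB HPA h d Hg')|apply (Hle A B RDA RDB HPA HPB d h Hg)].
Qed.

Lemma main_h (A B : PSig) (RDA : ReprData A) (RDB : ReprData B) (HPA : is_Pavelka A) (HPB : is_Pavelka B) d h :
  galois A B d h -> forall y, nat_emb A (h y) = hR (Rel_of A B d) (nat_emb B y).
Proof.
  intros Hg y. rewrite (main_d B A RDB RDA HPB HPA h d (galois_sym A B HPA HPB d h Hg) y).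
  unfold dR, hR. apply functional_extensionality; intros F. f_equal.
  apply functional_extensionality; intros G. rewrite (rel_sym A B RDA RDB HPA HPB d h Hg F G). reflexivity.
Qed.

Open Scope R_scope.

Lemma i01_oplus_v (a b : I01) : v01 (i01_oplus a b) = Rmin (v01 a + v01 b) 1.
Proof. reflexivity. Qed.

Lemma pow_le (K : Type) (x y : pow01 K) : mle x y <-> forall k, v01 (x k) <= v01 (y k).
Proof.
  unfold mle. change ((fun k => i01_oplus (i01_neg (x k)) (y k)) = (fun _ => i01_neg i01_zero) <->
    forall k, v01 (x k) <= v01 (y k)).
  split.
  - intros E k. assert (E' := f_equal (fun f => v01 (f k)) E). cbv beta in E'.
    rewrite i01_oplus_v, !i01_neg_v in E'. pose proof (v01_bnd (x k)); pose proof (v01_bnd (y k)).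
    simpl in E'. rmm.
  - intros H. apply functional_extensionality; intros k. apply I01_eq.
    rewrite i01_oplus_v, !i01_neg_v. specialize (H k). pose proof (v01_bnd (x k)); pose proof (v01_bnd (y k)).
    simpl. rmm.
Qed.

Lemma part1 (I J : Type) (Rel : I -> J -> I01) : galois (pow01 I) (pow01 J) (dR Rel) (hR Rel).
Proof.
  split; [|split; [|split]].
  - intros x y Hxy. apply pow_le. pose proof (proj1 (pow_le I x y) Hxy) as Hxy'. clear Hxy. rename Hxy' into Hxy. intros j. unfold dR.
    apply inf01_glb; [apply v01_bnd|]. intros i.
    eapply Rle_trans; [apply (inf01_lb (fun i => @marrow std01 (y i) (Rel i j)) i)|].
    rewrite !std_arrow_v. specialize (Hxy i). pose proof (v01_bnd (Rel i j)). rmm.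
  - intros x y Hxy. apply pow_le. pose proof (proj1 (pow_le J x y) Hxy) as Hxy'. clear Hxy. rename Hxy' into Hxy. intros i. unfold hR.
    apply inf01_glb; [apply v01_bnd|]. intros j.
    eapply Rle_trans; [apply (inf01_lb (fun j => @marrow std01 (y j) (Rel i j)) j)|].
    rewrite !std_arrow_v. specialize (Hxy j). pose proof (v01_bnd (Rel i j)). rmm.
  - intros y x. rewrite !pow_le. unfold dR, hR. split.
    + intros H i. apply inf01_glb; [apply v01_bnd|]. intros j. rewrite std_arrow_v.
      pose proof (inf01_lb (fun i => @marrow std01 (y i) (Rel i j)) i) as H1. cbv beta in H1.
      rewrite std_arrow_v in H1. specialize (H j).
      pose proof (v01_bnd (x j)); pose proof (v01_bnd (y i)); pose proof (v01_bnd (Rel i j)). rmm.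
    + intros H j. apply inf01_glb; [apply v01_bnd|]. intros i. rewrite std_arrow_v.
      pose proof (inf01_lb (fun j => @marrow std01 (x j) (Rel i j)) j) as H1. cbv beta in H1.
      rewrite std_arrow_v in H1. specialize (H i).
      pose proof (v01_bnd (x j)); pose proof (v01_bnd (y i)); pose proof (v01_bnd (Rel i j)). rmm.
  - intros r x. apply functional_extensionality; intros j. apply I01_eq.
    change (v01 (i01_oplus (i01_neg (i01_cst r)) (dR Rel x j)) =
            v01 (dR Rel (fun i => i01_neg (i01_oplus (i01_neg (i01_cst r)) (i01_neg (x i)))) j)).
    rewrite i01_oplus_v, i01_neg_v, v01_cst. unfold dR.
    set (D := v01 (inf01 (fun i => @marrow std01 (x i) (Rel i j)))).
    set (E := v01 (inf01 (fun i => @marrow std01 (i01_neg (i01_oplus (i01_neg (i01_cst r)) (i01_neg (x i)))) (Rel i j)))).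
    assert (HD : forall i, D <= Rmin 1 (1 - v01 (x i) + v01 (Rel i j))).
    { intros i. unfold D. rewrite <- std_arrow_v. apply (inf01_lb (fun i => @marrow std01 (x i) (Rel i j))). }
    assert (HE : forall i, E <= Rmin 1 (1 - Rmax 0 (qv r + v01 (x i) - 1) + v01 (Rel i j))).
    { intros i. unfold E.
      pose proof (inf01_lb (fun i => @marrow std01 (i01_neg (i01_oplus (i01_neg (i01_cst r)) (i01_neg (x i)))) (Rel i j)) i) as H1.
      cbv beta in H1. rewrite std_arrow_v, i01_neg_v, i01_oplus_v, !i01_neg_v, v01_cst in H1.
      pose proof (v01_bnd (x i)); pose proof (qv_bnd r). rmm. }
    pose proof (qv_bnd r). assert (HDb : 0 <= D <= 1) by apply v01_bnd. assert (HEb : 0 <= E <= 1) by apply v01_bnd.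
    apply Rle_antisym.
    + unfold E. apply inf01_glb. rmm. intros i. rewrite std_arrow_v, i01_neg_v, i01_oplus_v, !i01_neg_v, v01_cst.
      specialize (HD i). pose proof (v01_bnd (x i)); pose proof (v01_bnd (Rel i j)). rmm.
    + apply Rnot_lt_le; intros Hlt.
      assert (E - 1 + qv r <= D).
      { unfold D. apply inf01_glb; [lra|]. intros i. rewrite std_arrow_v. specialize (HE i).
        pose proof (v01_bnd (x i)); pose proof (v01_bnd (Rel i j)). rmm. }
      rmm.
Qed.

Theorem theorem7 :
  (forall (I J : Type) (Rel : I -> J -> I01),
      galois (pow01 I) (pow01 J) (dR Rel) (hR Rel)) /\
  (forall (A B : PSig), is_Pavelka A -> is_Pavelka B ->
      semisimple A -> semisimple B ->
      forall (d : A -> B) (h : B -> A), galois A B d h ->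
        (forall x : A, nat_emb B (d x) = dR (Rel_of A B d) (nat_emb A x)) /\
        (forall y : B, nat_emb A (h y) = hR (Rel_of A B d) (nat_emb B y))).
Proof.
  split; [apply part1|].
  intros A B HPA HPB SA SB d h Hg.
  destruct (semisimple_repr A HPA SA) as [RDA]. destruct (semisimple_repr B HPB SB) as [RDB].
  split.
  - intros x. apply (main_d A B RDA RDB HPA HPB d h Hg).
  - apply (main_h A B RDA RDB HPA HPB d h Hg).
Qed.
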